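(* For every instance of Problem (P), the output $(x_1,\dots,x_n)$ of Algorithm 1 is an optimal solution of Problem (P).
   Context: Problem (P): given an integer $n\ge1$, reals $0<q_1\le\cdots\le q_n$, $z_1,\dots,z_n>0$ and $K>0$, maximize $\sum_{i=1}^n x_i$ subject to $0\le x_i\le q_i$ for all $i$, $0\le x_1\le x_2\le\cdots\le x_n$, and $\sum_{i=1}^n z_ix_i\le K$. For $1\le i<j\le n+1$ let $\mathrm{sum}(i,j)=z_i+\cdots+z_{j-1}$ and $\mathrm{avg}(i,j)=\mathrm{sum}(i,j)/(j-i)$. Algorithm 1: Initialize $S=\{0,n+1\}$, $y_i=\mathrm{avg}(i,n+1)$ and $x_i=0$ for $i=1,\dots,n$, and $\hat B=K$. While $\hat B>0$ and $S\ne\{0,1,\dots,n+1\}$, perform an iteration: let $i^*$ be the index $i\in\{1,\dots,n\}\setminus S$ minimizing $y_i$, ties broken in favour of the smallest index; let $i_L=\max\{j\in S:j<i^*\}$ and $i_R=\min\{j\in S:j>i^*\}$; set $d=\min\{\hat B/((i_R-i^* )y_{i^*}),\ q_{i^*}-x_{i^*}\}$; set $\hat B\leftarrow\hat B-d(i_R-i^* )y_{i^*}$; set $x_i\leftarrow x_i+d$ for all $i^*\le i<i_R$; set $y_i\leftarrow\mathrm{avg}(i,i^* )$ for all $i_L<i<i^*$; add $i^*$ to $S$. When the loop ends, output $x_1,\dots,x_n$. *)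

(* Defs.v *)
From HB Require Import structures.
From mathcomp Require Import all_boot all_order all_algebra.
From mathcomp Require Import reals.
Set Implicit Arguments. Unset Strict Implicit. Unset Printing Implicit Defensive.
Import Order.TTheory GRing.Theory Num.Theory.
Local Open Scope ring_scope.

Section Alg.
Variable R : realType.
Variables (n : nat) (q z : nat -> R) (K : R).

Definition zsum (i j : nat) : R := \sum_(i <= k < j) z k.
Definition avg (i j : nat) : R := zsum i j / (j - i)%:R.

Record state := State { stS : nat -> bool; sty : nat -> R; stx : nat -> R; stB : R }.

Definition init_state : state :=
  State (fun j => (j == 0)%N || (j == n.+1)%N) (fun i => avg i n.+1) (fun _ => 0) K.

Definition remaining (s : state) : seq nat := [seq i <- iota 1 n | ~~ stS s i].

(* argmin of y over a nonempty list, ties broken in favour of the earliest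
   (= smallest, since the list is increasing) index *)
Definition argmin_y (y : nat -> R) (l : seq nat) : nat :=
  foldl (fun best i => if y i < y best then i else best) (head 0%N l) (behead l).

Definition step (s : state) : state :=
  let S := stS s in let y := sty s in let x := stx s in let B := stB s in
  let istar := argmin_y y (remaining s) in
  let iL := last 0%N [seq j <- iota 0 istar | S j] in
  let iR := head n.+1 [seq j <- iota istar.+1 (n - istar) | S j] in
  let d := Num.min (B / ((iR - istar)%:R * y istar)) (q istar - x istar) in
  State (fun j => S j || (j == istar))
        (fun i => if (iL < i < istar)%N then avg i istar else y i)
        (fun i => if (istar <= i < iR)%N then x i + d else x i)
        (B - d * (iR - istar)%:R * y istar).

Definition loop_body (s : state) : state :=
  if (0 < stB s) && (remaining s != [::]) then step s else s.

(* Each real iteration adds a new index of {1..n} to S, so the loop performs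
   at most n iterations; after that loop_body is the identity. *)
Definition algorithm1_output : nat -> R := stx (iter n loop_body init_state).

End Alg.

Definition feasible (R : realType) (n : nat) (q z : nat -> R) (K : R) (x : nat -> R) : Prop :=
  (forall i, (1 <= i <= n)%N -> 0 <= x i <= q i) /\
  (0 <= x 1%N) /\
  (forall i, (1 <= i < n)%N -> x i <= x i.+1) /\
  (\sum_(1 <= i < n.+1) z i * x i <= K).

Definition optimal (R : realType) (n : nat) (q z : nat -> R) (K : R) (x : nat -> R) : Prop :=
  feasible n q z K x /\
  forall x', feasible n q z K x' -> \sum_(1 <= i < n.+1) x' i <= \sum_(1 <= i < n.+1) x i.

(* Main.v *)
Require Import Defs.
From HB Require Import structures.
From mathcomp Require Import all_boot all_order all_algebra.
From mathcomp Require Import reals.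
From mathcomp Require Import zify ring lra.
Import Order.TTheory GRing.Theory Num.Theory.
Local Open Scope ring_scope.
Set Implicit Arguments. Unset Strict Implicit. Unset Printing Implicit Defensive.

Definition nxt (S : nat -> bool) (N i b : nat) : Prop :=
  [/\ (i < b)%N, (b <= N)%N, S b & forall k, (i < k < b)%N -> ~~ S k].

Lemma nxt_uniq S N i b1 b2 : nxt S N i b1 -> nxt S N i b2 -> b1 = b2.
Proof.
case=> h1 h2 h3 h4 [g1 g2 g3 g4].
case: (ltngtP b1 b2) => // H.
- by move: (g4 b1); rewrite h1 H h3 => /(_ isT).
- by move: (h4 b2); rewrite g1 H g3 => /(_ isT).
Qed.

Lemma last_filter_iota (S : nat -> bool) m : S 0%N -> (1 <= m)%N ->
  let L := last 0%N [seq j <- iota 0 m | S j] in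
  [/\ (L < m)%N, S L & forall k, (L < k < m)%N -> ~~ S k].
Proof.
move=> S0; elim: m => [//|m IH] _; cbv zeta.
rewrite -[m.+1]addn1 iotaD add0n filter_cat last_cat /=.
case Sm: (S m) => /=.
  split => //; first by lia.
  by move=> k /andP[a b]; lia.
case: m IH Sm => [|m] IH Sm; first by rewrite Sm in S0.
have [h1 h2 h3] := IH isT; split => //; first by lia.
move=> k /andP[a b]; case: (ltngtP k m.+1) => c.
- by apply: h3; rewrite a c.
- lia.
- by rewrite c Sm.
Qed.

Lemma head_filter_iota (S : nat -> bool) a m :
  let H := head (a + m)%N [seq j <- iota a m | S j] in
  [/\ (a <= H <= a + m)%N, S H \/ H = (a + m)%N & forall k, (a <= k < H)%N -> ~~ S k].
Proof.
elim: m a => [|m IH] a /=.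
  rewrite addn0; split => //; first by rewrite leqnn.
  by right. by move=> k; lia.
case Sa: (S a) => /=.
  split => //; first by lia. by left.
  by move=> k; lia.
have [h1 h2 h3] := IH a.+1; rewrite -addSnnS.
split => //; first by lia.
move=> k /andP[k1 k2]; case: (ltngtP k a) => c; first lia.
- by apply: h3; lia.
- by rewrite c Sa.
Qed.

Lemma argmin_spec (R : realType) (y : nat -> R) (l : seq nat) : l != [::] ->
  argmin_y y l \in l /\ forall i, i \in l -> y (argmin_y y l) <= y i.
Proof.
case: l => [//|a l] _; rewrite /argmin_y /=.
suff: forall b, (foldl (fun best i => if y i < y best then i else best) b l \in b :: l) /\
   y (foldl (fun best i => if y i < y best then i else best) b l) <= y b /\
   forall i, i \in l -> y (foldl (fun best i => if y i < y best then i else best) b l) <= y i.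
  move=> /(_ a) [h1 [h2 h3]]; split => // i; rewrite inE => /orP[/eqP->//|]; exact: h3.
elim: l => [|c l IH] b /=; first by rewrite inE eqxx.
case: ifP => hc.
  have [h1 [h2 h3]] := IH c; split.
    by move: h1; rewrite !inE => /orP[->|->]; rewrite ?orbT.
  split; first by apply: (le_trans h2); apply: ltW.
  by move=> i; rewrite inE => /orP[/eqP->//|]; exact: h3.
have [h1 [h2 h3]] := IH b; split.
  by move: h1; rewrite !inE => /orP[->|->]; rewrite ?orbT.
split => // i; rewrite inE => /orP[/eqP->|]; last exact: h3.
by apply: (le_trans h2); rewrite leNgt hc.
Qed.

Section Real.
Variable R : realType.
Variable z : nat -> R.

Definition Vf (l : R) (a b : nat) : R := (b - a)%:R * l - zsum z a b.

Lemma zsum_cat a c b : (a <= c <= b)%N -> zsum z a b = zsum z a c + zsum z c b.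
Proof. by move=> /andP[h1 h2]; rewrite /zsum (big_cat_nat h1 h2). Qed.

Lemma Vf_cat l a c b : (a <= c <= b)%N -> Vf l a b = Vf l a c + Vf l c b.
Proof.
move=> h; rewrite /Vf (zsum_cat h).
have -> : (b - a)%N = ((c - a) + (b - c))%N by lia.
rewrite natrD; ring.
Qed.

Lemma Vf_sum l a b : Vf l a b = \sum_(a <= i < b) (l - z i).
Proof.
rewrite /Vf /zsum sumrB; congr (_ - _).
by rewrite sumr_const_nat mulr_natl.
Qed.

Lemma avg_ge l a b : (a < b)%N -> (l <= avg z a b) = (Vf l a b <= 0).
Proof.
move=> h; have hp : 0 < (b - a)%:R :> R by rewrite ltr0n subn_gt0.
rewrite /avg /Vf ler_pdivlMr // subr_le0 mulrC //.
Qed.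

Lemma avg_le l a b : (a < b)%N -> (avg z a b <= l) = (0 <= Vf l a b).
Proof.
move=> h; have hp : 0 < (b - a)%:R :> R by rewrite ltr0n subn_gt0.
rewrite /avg /Vf ler_pdivrMr // subr_ge0 mulrC //.
Qed.

Lemma avg_eq l a b : (a < b)%N -> (avg z a b == l) = (Vf l a b == 0).
Proof.
move=> h; rewrite eq_le avg_le // avg_ge // [RHS]eq_le.
by rewrite andbC.
Qed.

Lemma zsum_gt0 a b : (a < b)%N -> (forall i, (a <= i < b)%N -> 0 < z i) -> 0 < zsum z a b.
Proof.
move=> h hz; rewrite /zsum big_ltn //.
apply: ltr_wpDr; last by apply: hz; rewrite leqnn h.
rewrite big_nat_cond; apply: sumr_ge0 => i /andP[/andP[h1 h2] _].
apply: ltW; apply: hz; lia.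
Qed.

Lemma avg_gt0 a b : (a < b)%N -> (forall i, (a <= i < b)%N -> 0 < z i) -> 0 < avg z a b.
Proof.
move=> h hz; rewrite /avg divr_gt0 ?zsum_gt0 //.
by rewrite ltr0n subn_gt0.
Qed.

End Real.

Lemma nxt_exists (S : nat -> bool) n j : S n.+1 -> (j <= n)%N -> exists b, nxt S n.+1 j b.
Proof.
move=> Sn hj; have [h1 h2 h3] := head_filter_iota S j.+1 (n - j).
have e : (j.+1 + (n - j))%N = n.+1 by lia.
move: h1 h2 h3; rewrite e; set H := head _ _ => h1 h2 h3.
exists H; split; [lia|lia| by case: h2 => // -> | ].
by move=> k /andP[k1 k2]; apply: h3; rewrite k1 k2.
Qed.

Section Lag.
Variable R : realType.
Variables (n : nat) (q z : nat -> R) (S : nat -> bool) (l : R) (x x' : nat -> R).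
Hypothesis Sn : S n.+1.
Hypothesis P1 : forall i b, (1 <= i <= n)%N -> ~~ S i -> nxt S n.+1 i b -> l <= avg z i b.
Hypothesis P2 : forall p b, (1 <= p <= n)%N -> S p -> nxt S n.+1 p b ->
  avg z p b <= l /\ (x p = q p \/ avg z p b = l).
Hypothesis X0 : x 0%N = 0.
Hypothesis X1 : forall i, (1 <= i <= n)%N -> ~~ S i -> x i = x i.-1.
Hypothesis F1 : forall i, (1 <= i <= n)%N -> x' i <= q i.
Hypothesis F2 : 0 <= x' 1%N.
Hypothesis F3 : forall i, (1 <= i < n)%N -> x' i <= x' i.+1.

Lemma const_x j b : (1 <= j)%N -> nxt S n.+1 j b -> forall i, (j <= i < b)%N -> x i = x j.
Proof.
move=> hj [h1 h2 h3 h4]; elim=> [|i IH]; first by move=> /andP[a _]; lia.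
move=> /andP[a c]; case: (ltngtP j i.+1) => e; last by rewrite e.
  rewrite X1 /=; last by apply: h4; rewrite e c.
  by apply: IH; lia. by lia.
lia.
Qed.

Lemma const_sum j b : (1 <= j)%N -> nxt S n.+1 j b ->
  \sum_(j <= i < b) (l - z i) * x i = x j * Vf z l j b.
Proof.
move=> hj hn; rewrite Vf_sum mulr_sumr big_nat_cond [RHS]big_nat_cond.
apply: eq_bigr => i /andP[hi _]; rewrite (const_x hj hn hi); ring.
Qed.

Lemma split_x j b : (1 <= j)%N -> nxt S n.+1 j b ->
  \sum_(j <= i < n.+1) (l - z i) * x i = x j * Vf z l j b + \sum_(b <= i < n.+1) (l - z i) * x i.
Proof.
move=> hj hn; move: (hn) => [h1 h2 _ _].
rewrite (@big_cat_nat _ _ _ b j n.+1) ?(ltnW h1) //.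
by rewrite (const_sum hj hn).
Qed.

Lemma pstep p b : (1 <= p <= n)%N -> S p -> nxt S n.+1 p b ->
  x' p * Vf z l p b <= x p * Vf z l p b.
Proof.
move=> hp Sp hn; have [h1 h2] := P2 hp Sp hn.
move: (hn) => [hpb _ _ _].
have V0 : 0 <= Vf z l p b by rewrite -avg_le.
case: h2 => [->|e].
  by apply: ler_wpM2r => //; apply: F1.
have : Vf z l p b == 0 by rewrite -avg_eq // e.
by move/eqP => ->; rewrite !mulr0.
Qed.

Definition Tprop j b := \sum_(j <= i < n.+1) (l - z i) * x' i <=
  x' j * Vf z l j b + \sum_(b <= i < n.+1) (l - z i) * x i.

Lemma Vf1 j : Vf z l j j.+1 = l - z j.
Proof. by rewrite Vf_sum big_nat1. Qed.

Lemma T_step j : (1 <= j <= n)%N ->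
  (forall b', (j.+1 <= n)%N -> nxt S n.+1 j.+1 b' -> Tprop j.+1 b') ->
  forall b, nxt S n.+1 j b -> Tprop j b.
Proof.
move=> /andP[hj1 hjn] IH b hn; rewrite /Tprop big_ltn ?ltnS //.
move: (hn) => [hb1 hb2 Sb hb4].
case: (ltngtP b j.+1) => e; first by lia.
-
  have nS1 : ~~ S j.+1 by apply: hb4; rewrite leqnn e.
  have hn1 : nxt S n.+1 j.+1 b.
    split => //. by move=> k /andP[k1 k2]; apply: hb4; rewrite k2 andbT; lia.
  have hj1n : (j.+1 <= n)%N by lia.
  have := IH b hj1n hn1; rewrite /Tprop => IHb.
  have Vle : Vf z l j.+1 b <= 0 by rewrite -avg_ge //; apply: P1 => //; lia.
  have mono : x' j <= x' j.+1 by apply: F3; lia.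
  rewrite (@Vf_cat _ _ _ j j.+1 b); last by rewrite leqnSn (ltnW e).
  rewrite Vf1.
  apply: le_trans (lerD (lexx _) IHb) _.
  have hh : x' j.+1 * Vf z l j.+1 b <= x' j * Vf z l j.+1 b by apply: ler_wnM2r.
  rewrite -subr_ge0; set A := \sum_(b <= i < n.+1) _.
  rewrite (_ : _ - _ = x' j * Vf z l j.+1 b - x' j.+1 * Vf z l j.+1 b); first by rewrite subr_ge0.
  ring.
-
  subst b; rewrite Vf1 mulrC lerD2l.
  case: (ltngtP j.+1 n.+1) => e2; last first.
  + by rewrite e2 !big_geq.
  + lia.
  + have hj1n : (j.+1 <= n)%N by lia.
    have [b' hb'] := nxt_exists Sn hj1n.
    apply: le_trans (IH b' hj1n hb') _.
    rewrite (@split_x j.+1 b') // lerD2r.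
    by apply: pstep => //; rewrite hj1n.
Qed.

Lemma T_all k : forall j b, (j + k)%N = n -> (1 <= j)%N -> nxt S n.+1 j b -> Tprop j b.
Proof.
elim: k => [|k IHk] j b hjk hj hn.
  apply: T_step hn; first by rewrite hj; lia.
  by move=> b' hb'; lia.
apply: T_step hn; first by rewrite hj; lia.
by move=> b' _ hb'; apply: IHk => //; lia.
Qed.

Lemma lagrange : (1 <= n)%N ->
  \sum_(1 <= i < n.+1) (l - z i) * x' i <= \sum_(1 <= i < n.+1) (l - z i) * x i.
Proof.
move=> hn; have [b hb] := nxt_exists Sn hn.
have e : (1 + n.-1)%N = n by lia.
have T1 := T_all e (leqnn _) hb.
apply: le_trans T1 _; rewrite (split_x (leqnn _) hb) lerD2r.
case S1 : (S 1%N).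
  apply: pstep => //; by rewrite leqnn hn.
move: (hb) => [hb1 _ _ _].
have Vle : Vf z l 1 b <= 0 by rewrite -avg_ge //; apply: P1 => //; rewrite ?leqnn ?hn ?S1.
have -> : x 1%N = 0 by rewrite X1 ?S1 // leqnn hn.
by rewrite mul0r; apply: mulr_ge0_le0.
Qed.

End Lag.

Lemma min_facts (R : realType) (a b : R) :
  Num.min a b <= a /\ Num.min a b <= b /\ (Num.min a b = a \/ Num.min a b = b).
Proof.
rewrite minEle; case: ifP => h.
  by split => //; split => //; left.
have h' : b <= a by rewrite leNgt (lt_neqAle a b) h andbF.
by split => //; split => //; right.
Qed.

Lemma blk_const (R : realType) n (S : nat -> bool) (x : nat -> R) :
  (forall i, (1 <= i <= n)%N -> ~~ S i -> x i = x i.-1) ->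
  forall j b, (1 <= j)%N -> nxt S n.+1 j b -> forall i, (j <= i < b)%N -> x i = x j.
Proof.
move=> X1 j b hj [h1 h2 h3 h4]; elim=> [|i IH]; first by move=> /andP[a _]; lia.
move=> /andP[a c]; case: (ltngtP j i.+1) => e; last by rewrite e.
  rewrite X1 /=; last by apply: h4; rewrite e c.
  by apply: IH; lia. by lia.
lia.
Qed.

Section Alg.
Variable R : realType.
Variables (n : nat) (q z : nat -> R) (K : R).
Hypothesis hn : (1 <= n)%N.
Hypothesis q1 : 0 < q 1%N.
Hypothesis qmono : forall i, (1 <= i < n)%N -> q i <= q i.+1.
Hypothesis zpos : forall i, (1 <= i <= n)%N -> 0 < z i.
Hypothesis Kpos : 0 < K.

Lemma qle i j : (1 <= i)%N -> (i <= j <= n)%N -> q i <= q j.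
Proof.
move=> hi; elim: j => [|j IH] /andP[h1 h2]; first by lia.
case: (ltngtP i j.+1) => e; last by rewrite e.
  apply: le_trans (qmono _) => //; first by apply: IH; lia.
  lia.
lia.
Qed.

Lemma q_gt0 i : (1 <= i <= n)%N -> 0 < q i.
Proof. move=> /andP[h1 h2]; apply: lt_le_trans q1 _; apply: qle; lia. Qed.

Definition P7 (s : state R) : Prop :=
  (stB s = K /\ forall p, (1 <= p <= n)%N -> ~~ stS s p) \/
  exists l, [/\ 0 < l,
     (forall i, (1 <= i <= n)%N -> ~~ stS s i -> l <= sty s i) &
     (forall p b, (1 <= p <= n)%N -> stS s p -> nxt (stS s) n.+1 p b ->
        avg z p b <= l /\ (stx s p = q p \/ avg z p b = l))].

Record Inv (s : state R) : Prop := {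
  IS0 : stS s 0%N;
  ISn : stS s n.+1;
  IY : forall i b, (1 <= i <= n)%N -> ~~ stS s i -> nxt (stS s) n.+1 i b -> sty s i = avg z i b;
  IX0 : stx s 0%N = 0;
  IX1 : forall i, (1 <= i <= n)%N -> ~~ stS s i -> stx s i = stx s i.-1;
  IF1 : forall i, (1 <= i <= n)%N -> 0 <= stx s i <= q i;
  IF2 : forall i, (1 <= i < n)%N -> stx s i <= stx s i.+1;
  IB0 : 0 <= stB s;
  IB1 : \sum_(1 <= i < n.+1) z i * stx s i + stB s = K;
  ICap : 0 < stB s -> forall p, (1 <= p <= n)%N -> stS s p -> stx s p = q p;
  I7 : P7 s }.

Lemma init_inv : Inv (init_state n z K).
Proof.
split => //=.
- move=> i b hi hS [h1 h2 h3 h4]; move: h3 => /orP[/eqP e|/eqP e]; first by lia.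
  by rewrite e.
- move=> i hi; rewrite lexx /=; apply: ltW; exact: q_gt0.
- exact: ltW.
- by rewrite big1 ?add0r // => i _; rewrite mulr0.
- move=> _ p /andP[h1 h2] /orP[/eqP e|/eqP e]; lia.
- left; split => // p /andP[h1 h2]; apply/negP => /orP[/eqP e|/eqP e]; lia.
Qed.

Lemma nxt_add_back (S : nat -> bool) i0 N i b :
  nxt (fun j => S j || (j == i0)) N i b -> b != i0 -> nxt S N i b.
Proof.
move=> [h1 h2 h3 h4] hb; split => //.
  by move: h3 => /orP[//|/eqP e]; rewrite e eqxx in hb.
by move=> k hk; move: (h4 k hk); rewrite negb_or => /andP[].
Qed.

Lemma nxt_add (S : nat -> bool) i0 N i b :
  nxt S N i b -> ~~ (i < i0 < b)%N -> nxt (fun j => S j || (j == i0)) N i b.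
Proof.
move=> [h1 h2 h3 h4] hb; split => //; first by rewrite h3.
move=> k hk; rewrite negb_or h4 //=; apply/eqP => e; subst k; by rewrite hk in hb.
Qed.

Section Step.
Variable s : state R.
Variables (i0 iL iR : nat).
Hypothesis Hinv : Inv s.
Hypothesis HB : 0 < stB s.
Hypothesis Hi0 : (1 <= i0 <= n)%N.
Hypothesis HSi0 : ~~ stS s i0.
Hypothesis Hmin : forall i, (1 <= i <= n)%N -> ~~ stS s i -> sty s i0 <= sty s i.
Hypothesis HL1 : (iL < i0)%N.
Hypothesis HL2 : stS s iL.
Hypothesis HL3 : forall k, (iL < k < i0)%N -> ~~ stS s k.
Hypothesis HR : nxt (stS s) n.+1 i0 iR.

Definition dd := Num.min (stB s / ((iR - i0)%:R * sty s i0)) (q i0 - stx s i0).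

Definition s' := State (fun j => stS s j || (j == i0))
  (fun i => if (iL < i < i0)%N then avg z i i0 else sty s i)
  (fun i => if (i0 <= i < iR)%N then stx s i + dd else stx s i)
  (stB s - dd * (iR - i0)%:R * sty s i0).

Lemma R1 : (i0 < iR)%N. Proof. by case: HR. Qed.
Lemma R2 : (iR <= n.+1)%N. Proof. by case: HR. Qed.
Lemma R3 : stS s iR. Proof. by case: HR. Qed.
Lemma R4 : forall k, (i0 < k < iR)%N -> ~~ stS s k. Proof. by case: HR. Qed.

Lemma F_yi0 : sty s i0 = avg z i0 iR.
Proof. exact: (IY Hinv Hi0 HSi0 HR). Qed.

Lemma F_lam : 0 < sty s i0.
Proof.
rewrite F_yi0; apply: avg_gt0; first exact: R1.
move=> i /andP[a b]; apply: zpos; have := R2; move: Hi0 => /andP[c e]; lia.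
Qed.

Lemma F_c : 0 < (iR - i0)%:R * sty s i0.
Proof. by rewrite mulr_gt0 ?F_lam // ltr0n subn_gt0 R1. Qed.

Lemma F_xq : stx s i0 <= q i0.
Proof. by have /andP[] := IF1 Hinv Hi0. Qed.

Lemma F_d0 : 0 <= dd.
Proof.
rewrite /dd; have [_ [_ [->|->]]] := min_facts (stB s / ((iR - i0)%:R * sty s i0)) (q i0 - stx s i0).
  by rewrite divr_ge0 ?(ltW HB) ?(ltW F_c).
by rewrite subr_ge0 F_xq.
Qed.

Lemma F_dq : dd <= q i0 - stx s i0.
Proof. by have [_ [h _]] := min_facts (stB s / ((iR - i0)%:R * sty s i0)) (q i0 - stx s i0). Qed.

Lemma F_dB : dd * (iR - i0)%:R * sty s i0 <= stB s.
Proof.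
have [h _] := min_facts (stB s / ((iR - i0)%:R * sty s i0)) (q i0 - stx s i0).
rewrite -mulrA -ler_pdivlMr ?F_c //.
Qed.

Lemma F_blk i : (i0 <= i < iR)%N -> stx s i = stx s i0.
Proof.
move=> hi; apply: (blk_const (IX1 Hinv) _ HR hi); by case/andP: Hi0.
Qed.


Lemma L_Y : forall i b, (1 <= i <= n)%N -> ~~ stS s' i -> nxt (stS s') n.+1 i b -> sty s' i = avg z i b.
Proof.
move=> i b hi; rewrite /= negb_or => /andP[nSi ni0] hnb.
case: ifP => hLi.
  have hn' : nxt (fun j => stS s j || (j == i0)) n.+1 i i0.
    split; first by case/andP: hLi.
    - by case/andP: Hi0 => _ h; lia.
    - by rewrite eqxx orbT.
    - move=> k /andP[k1 k2]; rewrite negb_or HL3; last by case/andP: hLi => h _; rewrite k2; lia.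
      by rewrite neq_ltn k2.
  by rewrite (nxt_uniq hnb hn').
have bne : b != i0.
  apply/eqP => e; subst b; move: hnb => [h1 _ _ h4].
  case: (ltngtP i iL) => c.
  - by move: (h4 iL); rewrite c HL1 HL2 => /(_ isT).
  - by move: hLi; rewrite c h1.
  - by subst i; rewrite HL2 in nSi.
exact: (IY Hinv hi nSi (nxt_add_back hnb bne)).
Qed.

Lemma L_X0 : stx s' 0%N = 0.
Proof. by rewrite /=; case/andP: Hi0 => h _; rewrite leqNgt h /= (IX0 Hinv). Qed.

Lemma L_X1 : forall i, (1 <= i <= n)%N -> ~~ stS s' i -> stx s' i = stx s' i.-1.
Proof.
move=> i hi; rewrite /= negb_or => /andP[nSi ni0].
have niR : i != iR by apply/eqP => e; subst i; rewrite R3 in nSi.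
have e : (i0 <= i < iR)%N = (i0 <= i.-1 < iR)%N.
  move: hi ni0 niR => /andP[h1 h2] /eqP h3 /eqP h4.
  case: (ltngtP i0 i) => c1; case: (ltngtP i iR) => c2; apply/idP/idP; lia.
by rewrite -e (IX1 Hinv hi nSi).
Qed.


Lemma L_F1 : forall i, (1 <= i <= n)%N -> 0 <= stx s' i <= q i.
Proof.
move=> i hi; rewrite /=; case: ifP => hb; last exact: (IF1 Hinv hi).
rewrite (F_blk hb); have /andP[h1 _] := IF1 Hinv Hi0.
rewrite addr_ge0 ?F_d0 //=.
apply: le_trans (_ : q i0 <= q i).
  by have := F_dq; rewrite lerBrDl addrC.
by apply: qle; [case/andP: Hi0 | case/andP: hb => a _; case/andP: hi => _ c; rewrite a c].
Qed.

Lemma L_F2 : forall i, (1 <= i < n)%N -> stx s' i <= stx s' i.+1.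
Proof.
move=> i hi; have m := IF2 Hinv hi; rewrite /=.
case: ifP => h1; case: ifP => h2.
- by rewrite lerD2r.
- (* i in block, i+1 not: i+1 = iR *)
  have e : i.+1 = iR by move: h1 h2 => /andP[a b] /negbT; rewrite negb_and -!ltnNge; lia.
  have hiR : (1 <= iR <= n)%N by rewrite -e; lia.
  rewrite (F_blk h1) e (ICap Hinv HB hiR R3).
  apply: le_trans (_ : q i0 <= q iR).
    by have := F_dq; rewrite lerBrDl addrC.
  by apply: qle; [case/andP: Hi0 | rewrite -e; case/andP: Hi0 => a _; case/andP: h1 => b _; lia].
- by apply: le_trans m _; rewrite lerDl F_d0.
- exact: m.
Qed.

Lemma L_B0 : 0 <= stB s'.
Proof. by rewrite /= subr_ge0 F_dB. Qed.

Lemma zsum_iR : zsum z i0 iR = (iR - i0)%:R * sty s i0.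
Proof.
rewrite F_yi0 /avg mulrC divfK //; rewrite pnatr_eq0 subn_eq0 -ltnNge; exact: R1.
Qed.

Lemma L_B1 : \sum_(1 <= i < n.+1) z i * stx s' i + stB s' = K.
Proof.
rewrite -(IB1 Hinv) /=.
have h1 : (1 <= i0)%N by case/andP: Hi0.
have h2 := ltnW R1.
have h3 := R2.
have split3 : forall F : nat -> R, \sum_(1 <= i < n.+1) F i =
   \sum_(1 <= i < i0) F i + \sum_(i0 <= i < iR) F i + \sum_(iR <= i < n.+1) F i.
  move=> F; rewrite (@big_cat_nat _ _ _ i0 1 n.+1) ?h1 //; last by apply: leq_trans h2 h3.
  by rewrite (@big_cat_nat _ _ _ iR i0 n.+1) //; apply: addrA.
rewrite (split3 (fun i => z i * stx s i)) (split3 (fun i => z i * (if (i0 <= i < iR)%N then stx s i + dd else stx s i))).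
have eA : \sum_(1 <= i < i0) z i * (if (i0 <= i < iR)%N then stx s i + dd else stx s i) =
          \sum_(1 <= i < i0) z i * stx s i.
  by rewrite big_nat_cond [RHS]big_nat_cond; apply: eq_bigr => i /andP[/andP[a b] _]; rewrite leqNgt b.
have eC : \sum_(iR <= i < n.+1) z i * (if (i0 <= i < iR)%N then stx s i + dd else stx s i) =
          \sum_(iR <= i < n.+1) z i * stx s i.
  by rewrite big_nat_cond [RHS]big_nat_cond; apply: eq_bigr => i /andP[/andP[a b] _]; rewrite [(i < iR)%N]ltnNge a andbF.
have eB : \sum_(i0 <= i < iR) z i * (if (i0 <= i < iR)%N then stx s i + dd else stx s i) =
          \sum_(i0 <= i < iR) z i * stx s i + dd * zsum z i0 iR.
  rewrite /zsum mulr_sumr -big_split /= big_nat_cond [RHS]big_nat_cond.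
  by apply: eq_bigr => i /andP[hh _]; rewrite hh; ring.
rewrite eA eB eC zsum_iR; ring.
Qed.

Lemma L_dcap : 0 < stB s' -> dd = q i0 - stx s i0.
Proof.
move=> h; have [_ [_ [e|e]]] := min_facts (stB s / ((iR - i0)%:R * sty s i0)) (q i0 - stx s i0); last by rewrite /dd e.
exfalso; move: h; rewrite /= /dd e -mulrA divfK; first by rewrite subrr ltxx.
by rewrite gt_eqF // F_c.
Qed.

Lemma not_blk p : stS s p -> ~~ (i0 <= p < iR)%N.
Proof.
move=> Sp; apply/negP => /andP[a b]; case: (ltngtP i0 p) => c.
- by move: (R4 (k:=p)); rewrite c b Sp => /(_ isT).
- lia.
- by move: HSi0; rewrite c Sp.
Qed.

Lemma L_Cap : 0 < stB s' -> forall p, (1 <= p <= n)%N -> stS s' p -> stx s' p = q p.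
Proof.
move=> hB p hp; rewrite /= => /orP[Sp|/eqP e].
  by rewrite (negbTE (not_blk Sp)) (ICap Hinv HB).
subst p; rewrite leqnn R1 (L_dcap hB); ring.
Qed.


Lemma V0 : Vf z (sty s i0) i0 iR = 0.
Proof. by apply/eqP; rewrite -avg_eq ?R1 // -F_yi0. Qed.

Lemma nxt_through j : (j < i0)%N -> (forall k, (j < k < i0)%N -> ~~ stS s k) -> nxt (stS s) n.+1 j iR.
Proof.
move=> h1 h2; split; [by have := R1; lia | exact: R2 | exact: R3 |].
move=> k /andP[k1 k2]; case: (ltngtP k i0) => c.
- by apply: h2; rewrite k1 c.
- by apply: R4; rewrite c k2.
- by rewrite c.
Qed.

Lemma L_7 : P7 s'.
Proof.
right; exists (sty s i0); split.
- exact: F_lam.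
- move=> i hi; rewrite /= negb_or => /andP[nSi ni0].
  case: ifP => hLi; last exact: Hmin.
  move: hLi => /andP[hL hi0].
  have hnx : nxt (stS s) n.+1 i iR.
    apply: nxt_through => // k /andP[k1 k2]; apply: HL3; rewrite k2; lia.
  have h1 : sty s i0 <= avg z i iR by rewrite -(IY Hinv hi nSi hnx); exact: Hmin.
  have V1 : Vf z (sty s i0) i iR <= 0 by rewrite -avg_ge //; case: hnx.
  rewrite avg_ge //; move: V1; rewrite (@Vf_cat _ _ _ i i0 iR) ?V0 ?addr0 //.
  by rewrite (ltnW hi0) (ltnW R1).
- move=> p b hp; rewrite /= => Sp' hnb.
  case/orP: Sp' => [Sp|/eqP e].
  + have xq : stx s' p = q p.
      by rewrite /= (negbTE (not_blk Sp)) (ICap Hinv HB hp Sp).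
    split; last by left.
    case: (I7 Hinv) => [[_ hall] | [l [lpos lP1 lP2]]]; first by move: (hall p hp); rewrite Sp.
    have ll : l <= sty s i0 := lP1 i0 Hi0 HSi0.
    case: (eqVneq b i0) => [eb|bne].
    * subst b; move: (hnb) => [hpi _ _ h4].
      have hnx : nxt (stS s) n.+1 p iR.
        apply: nxt_through => // k hk; by move: (h4 k hk); rewrite negb_or => /andP[].
      have [h _] := lP2 p iR hp Sp hnx.
      have V1 : 0 <= Vf z (sty s i0) p iR.
        by rewrite -avg_le; [exact: le_trans ll | case: hnx].
      rewrite avg_le //; move: V1; rewrite (@Vf_cat _ _ _ p i0 iR) ?V0 ?addr0 //.
      by rewrite (ltnW hpi) (ltnW R1).
    * have [h _] := lP2 p b hp Sp (nxt_add_back hnb bne).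
      exact: le_trans ll.
  + subst p.
    have hn' : nxt (fun j => stS s j || (j == i0)) n.+1 i0 iR.
      by apply: (@nxt_add (stS s) i0 n.+1 i0 iR HR); rewrite ltnn.
    rewrite (nxt_uniq hnb hn') -F_yi0; split => //; by right.
Qed.

Lemma step_inv : Inv s'.
Proof.
split.
- by rewrite /= (IS0 Hinv).
- by rewrite /= (ISn Hinv).
- exact: L_Y.
- exact: L_X0.
- exact: L_X1.
- exact: L_F1.
- exact: L_F2.
- exact: L_B0.
- exact: L_B1.
- exact: L_Cap.
- exact: L_7.
Qed.

End Step.

Lemma mem_rem (s : state R) i : (i \in remaining n s) = (1 <= i <= n)%N && ~~ stS s i.
Proof. by rewrite /remaining mem_filter mem_iota andbC; congr (_ && _); lia. Qed.

Lemma loop_inv (s : state R) : Inv s -> Inv (loop_body n q z s).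
Proof.
move=> I; rewrite /loop_body; case: ifP => // /andP[hB hrem].
have [hin hmin] := argmin_spec (sty s) hrem.
move: hin hmin; set i0 := argmin_y (sty s) (remaining n s) => hin hmin.
move: hin; rewrite mem_rem => /andP[hi0 hS0].
have hi01 : (1 <= i0)%N by case/andP: hi0.
have [hL1 hL2 hL3] := last_filter_iota (IS0 I) hi01.
have [hR1 hR2 hR3] := head_filter_iota (stS s) i0.+1 (n - i0).
have e : (i0.+1 + (n - i0))%N = n.+1 by case/andP: hi0 => _ h; lia.
move: hR1 hR2 hR3; rewrite e => hR1 hR2 hR3.
set iL := last 0%N _ in hL1 hL2 hL3.
set iR := head n.+1 _ in hR1 hR2 hR3.
change (Inv (s' s i0 iL iR)).
apply: step_inv => //.
- by move=> i hi hSi; apply: hmin; rewrite mem_rem hi hSi.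
- split; [lia | lia | by case: hR2 => [//|->]; exact: (ISn I) |].
  by move=> k /andP[k1 k2]; apply: hR3; rewrite k1 k2.
Qed.

Definition stopped (s : state R) := ~~ ((0 < stB s) && (remaining n s != [::])).

Lemma rem_dec (s : state R) : Inv s -> ~~ stopped s -> (size (remaining n (loop_body n q z s)) < size (remaining n s))%N.
Proof.
move=> I; rewrite /stopped negbK => hg; rewrite /loop_body hg.
move: hg => /andP[hB hrem].
have [hin _] := argmin_spec (sty s) hrem.
move: hin; set i0 := argmin_y (sty s) (remaining n s) => hin.
have hin' := hin; move: hin'; rewrite mem_rem => /andP[hi0 hS0].
rewrite /remaining /step /= !size_filter.
have := count_predUI (fun i => ~~ (stS s i || (i == i0))) (pred1 i0) (iota 1 n).
have -> : count (predU (fun i => ~~ (stS s i || (i == i0))) (pred1 i0)) (iota 1 n) = count (fun i => ~~ stS s i) (iota 1 n).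
  apply: eq_count => i /=; case: (eqVneq i i0) => [->|ne]; first by rewrite hS0 orbT.
  by rewrite orbF orbF.
have -> : count (predI (fun i => ~~ (stS s i || (i == i0))) (pred1 i0)) (iota 1 n) = 0%N.
  apply/eqP; rewrite -leqn0 leqNgt -has_count; apply/hasP => -[i _] /=.
  by case: (eqVneq i i0) => [->|]; rewrite ?eqxx ?orbT ?andbF.
have -> : count (pred1 i0) (iota 1 n) = 1%N.
  rewrite (count_uniq_mem _ (iota_uniq 1 n)) mem_iota; case/andP: hi0 => a b.
  by rewrite a /=; lia.
rewrite -/i0; lia.
Qed.

Lemma iter_prop k : Inv (iter k (loop_body n q z) (init_state n z K)) /\
  (stopped (iter k (loop_body n q z) (init_state n z K)) \/
   (size (remaining n (iter k (loop_body n q z) (init_state n z K))) + k <= n)%N).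
Proof.
elim: k => [|k [I H]] /=.
  split; first exact: init_inv.
  by right; rewrite addn0 /remaining size_filter (leq_trans (count_size _ _)) // size_iota.
split; first exact: loop_inv.
set s0 := iter k _ _ in I H *.
case st : (stopped s0).
  left; move: (st); rewrite /loop_body /stopped => /negbTE ->; exact: st.
right; case: H => [|H]; first by rewrite st.
have := rem_dec I (negbT st); lia.
Qed.

Lemma final_stopped : let sf := iter n (loop_body n q z) (init_state n z K) in Inv sf /\ stopped sf.
Proof.
have [I [H|H]] := iter_prop n; split => //.
move: H; set sf := iter n _ _ => H.
have : size (remaining n sf) == 0%N by apply/eqP; lia.
rewrite size_eq0 => /eqP e.
by rewrite /stopped e eqxx andbF.
Qed.

Lemma main_opt : optimal n q z K (algorithm1_output n q z K).
Proof.
have [I st] := final_stopped.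
set sf := iter n _ _ in I st.
have -> : algorithm1_output n q z K = stx sf by [].
have feas : feasible n q z K (stx sf).
  split; first exact: (IF1 I).
  have h1 : (1 <= 1 <= n)%N by rewrite leqnn hn.
  split; first by have /andP[] := IF1 I h1.
  split; first exact: (IF2 I).
  by rewrite -(IB1 I) lerDl (IB0 I).
split => // x' [F1 [F2 [F3 F4]]].
case: (lerP (stB sf) 0) => hB.
- have B0 : stB sf = 0 by apply/eqP; rewrite eq_le hB (IB0 I).
  case: (I7 I) => [[hK _]|[l [lpos lP1 lP2]]].
    by move: Kpos; rewrite -hK B0 ltxx.
  have L := @lagrange R n q z (stS sf) l (stx sf) x' (ISn I) _ lP2 (IX0 I) (IX1 I) _ F2 F3 hn.
  have Lg : \sum_(1 <= i < n.+1) (l - z i) * x' i <= \sum_(1 <= i < n.+1) (l - z i) * stx sf i.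
    apply: L.
    + move=> i b hi hSi hnx; rewrite -(IY I hi hSi hnx); exact: lP1.
    + by move=> i hi; have /andP[] := F1 i hi.
  have ex : forall y : nat -> R, \sum_(1 <= i < n.+1) (l - z i) * y i =
       l * \sum_(1 <= i < n.+1) y i - \sum_(1 <= i < n.+1) z i * y i.
    by move=> y; rewrite mulr_sumr -sumrB; apply: eq_bigr => i _; ring.
  move: Lg; rewrite !ex.
  have hsum : \sum_(1 <= i < n.+1) z i * stx sf i = K by rewrite -(IB1 I) B0 addr0.
  rewrite hsum => Lg.
  rewrite -(ler_pM2l lpos); lra.
- move: st; rewrite /stopped hB /= negbK => /eqP hrem.
  have allS : forall p, (1 <= p <= n)%N -> stS sf p.
    move=> p hp; apply/negPn/negP => hS.
    have : p \in remaining n sf by rewrite mem_rem hp hS.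
    by rewrite hrem.
  rewrite big_nat_cond [X in _ <= X]big_nat_cond; apply: ler_sum => i /andP[hi _].
  have hi' : (1 <= i <= n)%N by rewrite -ltnS.
  rewrite (ICap I hB hi' (allS i hi')).
  by have /andP[] := F1 i hi'.
Qed.

End Alg.

Unset Implicit Arguments.

Theorem theorem3 (R : realType) (n : nat) (q z : nat -> R) (K : R) :
  (1 <= n)%N ->
  0 < q 1%N ->
  (forall i, (1 <= i < n)%N -> q i <= q i.+1) ->
  (forall i, (1 <= i <= n)%N -> 0 < z i) ->
  0 < K ->
  optimal n q z K (algorithm1_output n q z K).
Proof.
move=> h1 h2 h3 h4 h5; exact: main_opt.
Qed.
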